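(* Let $(\chi,u)$ be a rooted chirotope and let $m$ be the minimal degree of $v$ in a weak triangulation of $(\chi,u)$. Then a weak triangulation $\Delta$ of $(\chi,u)$ is the extension of a triangulation of $\chi$ if and only if $v$ has degree $m$ in $\Delta$.
   Context: A chirotope on a finite set $E$ is a map $\chi$ from ordered triples of distinct elements to $\{-1,1\}$ satisfying alternating symmetry, interiority and transitivity axioms. A rooted chirotope $(\chi,u)$ is a chirotope $\chi$ on $X\cup\{u\}$ with $u$ an extreme element (there is $y\neq u$ with $\chi(u,y,z)$ constant over all other $z$). A segment is a pair of distinct elements; two segments sharing an endpoint never cross, and segments $xy$, $zt$ with four distinct endpoints cross iff $\chi(x,y,z)=-\chi(x,y,t)$ and $\chi(z,t,x)=-\chi(z,t,y)$. A triangulation of $\chi$ is an inclusion-maximal set of pairwise non-crossing segments. Add a new element $v$ and set $\chi(x,y,v)=-\chi(x,y,u)$ for $x,y\in X$ ($\chi(x,u,v)$ stays undefined). For segments with endpoints in $X\cup\{u,v\}$ other than $uv$, crossing is defined by the same rule, where a segment containing $u$ and a segment containing $v$ are never crossing (so only defined values are used). A weak triangulation of $(\chi,u)$ is a maximal non-crossing collection of segments with endpoints in $X\cup\{u,v\}$ not containing the segment $uv$. Every triangulation $\Delta$ of $\chi$ extends uniquely to a weak triangulation, its extension, obtained by adding all segments $vx$ ($x\in X$) crossing no segment of $\Delta$. The degree of a vertex in $\Delta$ is the number of segments of $\Delta$ incident to it. *)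

(* Defs.v *)
From mathcomp Require Import all_boot.
Set Implicit Arguments. Unset Strict Implicit. Unset Printing Implicit Defensive.

(* A sign function: s x y z = true encodes the value +1, false encodes -1.
   Only its values on triples of pairwise distinct elements are meaningful. *)

Section Chirotope.
Variable T : finType.
Variable chi : T -> T -> T -> bool.

Definition distinct3 (x y z : T) := uniq [:: x; y; z].

(* Knuth-style axioms for (uniform, acyclic rank 3) chirotopes. *)
Definition alternating_symmetry :=
  forall x y z, distinct3 x y z ->
    chi x y z = chi y z x /\ chi x y z = ~~ chi y x z.

Definition interiority :=
  forall p q r t, uniq [:: p; q; r; t] ->
    chi t q r -> chi p t r -> chi p q t -> chi p q r.

Definition transitivity :=
  forall t s p q r, uniq [:: t; s; p; q; r] ->
    chi t s p -> chi t s q -> chi t s r -> chi t p q -> chi t q r -> chi t p r.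

Definition chirotope := [/\ alternating_symmetry, interiority & transitivity].

Definition extreme (u : T) :=
  exists2 y, y != u &
    forall z z', distinct3 u y z -> distinct3 u y z' -> chi u y z = chi u y z'.

End Chirotope.

Definition crossb (T : finType) (s : T -> T -> T -> bool) (A B : {set T}) : bool :=
  [exists x, exists y, exists z, exists t,
     [&& A == [set x; y], B == [set z; t], uniq [:: x; y; z; t],
         s x y z != s x y t & s z t x != s z t y]].

Definition segment (T : finType) (A : {set T}) := #|A| == 2.

(* Triangulation of chi: inclusion-maximal set of pairwise non-crossing segments. *)
Definition noncrossing_family (T : finType) (cr : {set T} -> {set T} -> bool)
  (ok : {set T} -> bool) (D : {set {set T}}) :=
  [/\ forall A, A \in D -> ok A,
      forall A B, A \in D -> B \in D -> ~~ cr A B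
    & forall A, ok A -> A \notin D -> exists2 B, B \in D & cr A B].

Definition triangulation (T : finType) (chi : T -> T -> T -> bool) (D : {set {set T}}) :=
  noncrossing_family (crossb chi) (@segment T) D.

(* The ground set X ∪ {u} is T; elements of X ∪ {u, v} are option T,
   with Some x ↦ x and None ↦ the new element v. *)
Section Weak.
Variables (T : finType) (chi : T -> T -> T -> bool) (u : T).

Notation v := (None : option T).

(* chi extended by chi(x,y,v) = - chi(x,y,u), together with the values forced
   by alternating symmetry.  Values involving both u and v (or v twice) are
   undefined; they are never used by wcrossb. *)
Definition chiv (a b c : option T) : bool :=
  match a, b, c with
  | Some x, Some y, Some z => chi x y z
  | Some x, Some y, None => ~~ chi x y u
  | Some x, None, Some z => chi x z u
  | None, Some y, Some z => ~~ chi y z u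
  | _, _, _ => false
  end.

Definition wcrossb (A B : {set option T}) : bool :=
  ~~ ((Some u \in A) && (v \in B)) && ~~ ((v \in A) && (Some u \in B))
  && crossb chiv A B.

Definition wsegment (A : {set option T}) : bool :=
  (#|A| == 2) && (A != [set Some u; v]).

Definition weak_triangulation (D : {set {set option T}}) :=
  noncrossing_family wcrossb wsegment D.

Definition degree (D : {set {set option T}}) (w : option T) : nat :=
  #|[set A in D | w \in A]|.

Definition liftseg (A : {set T}) : {set option T} := [set Some y | y in A].

Definition extension (D : {set {set T}}) : {set {set option T}} :=
  [set liftseg A | A in D] :|:
  [set [set v; Some x] | x in [set x | (x != u) &&
      [forall A in D, ~~ wcrossb [set v; Some x] (liftseg A)]]].

End Weak.

(* Main.v *)
Require Import Defs.
From mathcomp Require Import all_boot.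
Set Implicit Arguments. Unset Strict Implicit. Unset Printing Implicit Defensive.

Lemma d3 (T : eqType) (x y z : T) : x != y -> x != z -> y != z -> uniq [:: x; y; z].
Proof. by move=> h1 h2 h3; rewrite /= !inE negb_or h1 h2 h3. Qed.

Lemma c_yxz (T : finType) (chi : T -> T -> T -> bool) (Ha : alternating_symmetry chi) x y z :
  x != y -> x != z -> y != z -> chi y x z = ~~ chi x y z.
Proof. by move=> h1 h2 h3; case: (Ha x y z (d3 h1 h2 h3)) => _ ->; rewrite negbK. Qed.

Lemma c_yzx (T : finType) (chi : T -> T -> T -> bool) (Ha : alternating_symmetry chi) x y z :
  x != y -> x != z -> y != z -> chi y z x = chi x y z.
Proof. by move=> h1 h2 h3; case: (Ha x y z (d3 h1 h2 h3)) => ->. Qed.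

Lemma c_zxy (T : finType) (chi : T -> T -> T -> bool) (Ha : alternating_symmetry chi) x y z :
  x != y -> x != z -> y != z -> chi z x y = chi x y z.
Proof.
move=> h1 h2 h3; rewrite -(c_yzx Ha h1 h2 h3).
by rewrite (c_yzx Ha h3 _ _) // eq_sym.
Qed.

Lemma c_xzy (T : finType) (chi : T -> T -> T -> bool) (Ha : alternating_symmetry chi) x y z :
  x != y -> x != z -> y != z -> chi x z y = ~~ chi x y z.
Proof.
move=> h1 h2 h3.
have h4 : z != x by rewrite eq_sym.
have h5 : z != y by rewrite eq_sym.
by rewrite (c_yxz Ha h4 h5 h1) (c_zxy Ha h1 h2 h3).
Qed.

Lemma c_zyx (T : finType) (chi : T -> T -> T -> bool) (Ha : alternating_symmetry chi) x y z :
  x != y -> x != z -> y != z -> chi z y x = ~~ chi x y z.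
Proof.
move=> h1 h2 h3; have h4 : y != x by rewrite eq_sym.
by rewrite (c_zxy Ha h4 h3 h2) (c_yxz Ha h1 h2 h3).
Qed.

Lemma ax4b (T : finType) (chi : T -> T -> T -> bool) (H4 : interiority chi) p q r t :
  uniq [:: p; q; r; t] -> chi t q r ==> chi p t r ==> chi p q t ==> chi p q r.
Proof. move=> u; apply/implyP=> h1; apply/implyP=> h2; apply/implyP=> h3; exact: H4 u h1 h2 h3. Qed.

Lemma ax5b (T : finType) (chi : T -> T -> T -> bool) (H5 : transitivity chi) t s p q r :
  uniq [:: t; s; p; q; r] ->
  chi t s p ==> chi t s q ==> chi t s r ==> chi t p q ==> chi t q r ==> chi t p r.
Proof. move=> u; apply/implyP=> h1; apply/implyP=> h2; apply/implyP=> h3; apply/implyP=> h4; apply/implyP=> h5; exact: H5 u h1 h2 h3 h4 h5. Qed.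
Lemma F0f (T : finType) (chi : T -> T -> T -> bool) (Ha : alternating_symmetry chi) (H4 : interiority chi) (H5 : transitivity chi) (u y p q r : T) (d_uy : u != y) (d_up : u != p) (d_uq : u != q) (d_ur : u != r) (d_yp : y != p) (d_yq : y != q) (d_yr : y != r) (d_pq : p != q) (d_pr : p != r) (d_qr : q != r) :
  ~~ chi u y p -> ~~ chi u y q -> ~~ chi u y r -> chi u p q -> chi u q r -> chi u p r.
Proof.
move=> h0 h1 h2 h3 h4.
apply: contraT => hc.
have d_yu : y != u by rewrite eq_sym.
have d_pu : p != u by rewrite eq_sym.
have d_qu : q != u by rewrite eq_sym.
have d_ru : r != u by rewrite eq_sym.
have d_py : p != y by rewrite eq_sym.
have d_qy : q != y by rewrite eq_sym.
have d_ry : r != y by rewrite eq_sym.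
have d_qp : q != p by rewrite eq_sym.
have d_rp : r != p by rewrite eq_sym.
have d_rq : r != q by rewrite eq_sym.
have i0 := @ax4b _ _ H4 u p r q ltac:(by rewrite /= !inE !negb_or !d_up !d_ur !d_uq !d_pr !d_pq !d_rq).
have i1 := @ax5b _ _ H5 r p u q y ltac:(by rewrite /= !inE !negb_or !d_rp !d_ru !d_rq !d_ry !d_pu !d_pq !d_py !d_uq !d_uy !d_qy).
have i2 := @ax5b _ _ H5 q r u p y ltac:(by rewrite /= !inE !negb_or !d_qr !d_qu !d_qp !d_qy !d_ru !d_rp !d_ry !d_up !d_uy !d_py).
have i3 := @ax5b _ _ H5 p q u r y ltac:(by rewrite /= !inE !negb_or !d_pq !d_pu !d_pr !d_py !d_qu !d_qr !d_qy !d_ur !d_uy !d_ry).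
have i4 := @ax4b _ _ H4 y p q r ltac:(by rewrite /= !inE !negb_or !d_yp !d_yq !d_yr !d_pq !d_pr !d_qr).
have i5 := @ax5b _ _ H5 y u p q r ltac:(by rewrite /= !inE !negb_or !d_yu !d_yp !d_yq !d_yr !d_up !d_uq !d_ur !d_pq !d_pr !d_qr).
move: h0 h1 h2 h3 h4 hc i0 i1 i2 i3 i4 i5.
rewrite (c_yxz Ha d_uy d_up d_yp) (c_yxz Ha d_uy d_uq d_yq) (c_yxz Ha d_uy d_ur d_yr) (c_xzy Ha d_yq d_yr d_qr) (c_zxy Ha d_uy d_up d_yp) (c_yxz Ha d_up d_ur d_pr) (c_yzx Ha d_up d_uq d_pq) (c_yzx Ha d_yp d_yq d_pq) (c_yzx Ha d_yp d_yr d_pr) (c_zxy Ha d_uy d_uq d_yq) (c_zxy Ha d_up d_uq d_pq) (c_zyx Ha d_yp d_yq d_pq) (c_yxz Ha d_pq d_pr d_qr) (c_yzx Ha d_uq d_ur d_qr) (c_yzx Ha d_yq d_yr d_qr) (c_yzx Ha d_pq d_pr d_qr) (c_zxy Ha d_uy d_ur d_yr) (c_zxy Ha d_uq d_ur d_qr) (c_zyx Ha d_up d_ur d_pr) (c_zyx Ha d_yp d_yr d_pr) (c_zxy Ha d_pq d_pr d_qr) (c_zyx Ha d_yq d_yr d_qr).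
move: (chi u y p) (chi u y q) (chi u y r) (chi u p q) (chi u p r) (chi u q r) (chi y p q) (chi y p r) (chi y q r) (chi p q r).
by do 10!case.
Qed.

Lemma F1 (T : finType) (chi : T -> T -> T -> bool) (Ha : alternating_symmetry chi) (H4 : interiority chi) (H5 : transitivity chi) (u a b c w : T) (d_ua : u != a) (d_ub : u != b) (d_uc : u != c) (d_uw : u != w) (d_ab : a != b) (d_ac : a != c) (d_aw : a != w) (d_bc : b != c) (d_bw : b != w) (d_cw : c != w) :
  chi u a b -> chi u a c -> chi u a w -> chi u b c -> chi u b w -> chi u c w -> chi a b c -> chi w a c -> chi w b c -> ~~ chi a b w -> False.
Proof.
move=> h0 h1 h2 h3 h4 h5 h6 h7 h8 h9.
have d_au : a != u by rewrite eq_sym.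
have d_bu : b != u by rewrite eq_sym.
have d_cu : c != u by rewrite eq_sym.
have d_wu : w != u by rewrite eq_sym.
have d_ba : b != a by rewrite eq_sym.
have d_ca : c != a by rewrite eq_sym.
have d_wa : w != a by rewrite eq_sym.
have d_cb : c != b by rewrite eq_sym.
have d_wb : w != b by rewrite eq_sym.
have d_wc : w != c by rewrite eq_sym.
have i0 := @ax5b _ _ H5 b c u a w ltac:(by rewrite /= !inE !negb_or !d_bc !d_bu !d_ba !d_bw !d_cu !d_ca !d_cw !d_ua !d_uw !d_aw).
move: h0 h1 h2 h3 h4 h5 h6 h7 h8 h9 i0.
rewrite (c_zxy Ha d_ua d_ub d_ab) (c_yxz Ha d_ub d_uw d_bw) (c_yxz Ha d_ab d_aw d_bw) (c_yzx Ha d_ub d_uc d_bc) (c_yzx Ha d_ab d_ac d_bc) (c_zxy Ha d_ac d_aw d_cw) (c_zxy Ha d_bc d_bw d_cw).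
move: (chi u a b) (chi u a c) (chi u a w) (chi u b c) (chi u b w) (chi u c w) (chi a b c) (chi a b w) (chi a c w) (chi b c w).
by do 10!case.
Qed.

Lemma F2 (T : finType) (chi : T -> T -> T -> bool) (Ha : alternating_symmetry chi) (H4 : interiority chi) (H5 : transitivity chi) (u a c b w : T) (d_ua : u != a) (d_uc : u != c) (d_ub : u != b) (d_uw : u != w) (d_ac : a != c) (d_ab : a != b) (d_aw : a != w) (d_cb : c != b) (d_cw : c != w) (d_bw : b != w) :
  chi u a c -> chi u a b -> chi u a w -> chi u c b -> chi u c w -> chi u b w -> chi a b c -> chi w a c -> chi w b c -> ~~ chi a b w -> False.
Proof.
move=> h0 h1 h2 h3 h4 h5 h6 h7 h8 h9.
have d_au : a != u by rewrite eq_sym.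
have d_cu : c != u by rewrite eq_sym.
have d_bu : b != u by rewrite eq_sym.
have d_wu : w != u by rewrite eq_sym.
have d_ca : c != a by rewrite eq_sym.
have d_ba : b != a by rewrite eq_sym.
have d_wa : w != a by rewrite eq_sym.
have d_bc : b != c by rewrite eq_sym.
have d_wc : w != c by rewrite eq_sym.
have d_wb : w != b by rewrite eq_sym.
have i0 := @ax5b _ _ H5 c w u a b ltac:(by rewrite /= !inE !negb_or !d_cw !d_cu !d_ca !d_cb !d_wu !d_wa !d_wb !d_ua !d_ub !d_ab).
move: h0 h1 h2 h3 h4 h5 h6 h7 h8 h9 i0.
rewrite (c_xzy Ha d_ac d_ab d_cb) (c_zxy Ha d_ua d_uc d_ac) (c_yxz Ha d_uc d_ub d_cb) (c_yxz Ha d_ac d_ab d_cb) (c_yzx Ha d_uc d_uw d_cw) (c_yzx Ha d_ac d_aw d_cw) (c_xzy Ha d_cb d_cw d_bw) (c_zxy Ha d_ac d_aw d_cw) (c_zyx Ha d_cb d_cw d_bw).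
move: (chi u a c) (chi u a b) (chi u a w) (chi u c b) (chi u c w) (chi u b w) (chi a c b) (chi a c w) (chi a b w) (chi c b w).
by do 10!case.
Qed.

Lemma F3 (T : finType) (chi : T -> T -> T -> bool) (Ha : alternating_symmetry chi) (H4 : interiority chi) (H5 : transitivity chi) (u p x c w : T) (d_up : u != p) (d_ux : u != x) (d_uc : u != c) (d_uw : u != w) (d_px : p != x) (d_pc : p != c) (d_pw : p != w) (d_xc : x != c) (d_xw : x != w) (d_cw : c != w) :
  chi u p x -> chi u p c -> chi u p w -> chi u x c -> chi u x w -> chi u c w -> ~~ chi p c x -> chi w p c -> chi w x c -> chi p w x -> False.
Proof.
move=> h0 h1 h2 h3 h4 h5 h6 h7 h8 h9.
have d_pu : p != u by rewrite eq_sym.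
have d_xu : x != u by rewrite eq_sym.
have d_cu : c != u by rewrite eq_sym.
have d_wu : w != u by rewrite eq_sym.
have d_xp : x != p by rewrite eq_sym.
have d_cp : c != p by rewrite eq_sym.
have d_wp : w != p by rewrite eq_sym.
have d_cx : c != x by rewrite eq_sym.
have d_wx : w != x by rewrite eq_sym.
have d_wc : w != c by rewrite eq_sym.
have i0 := @ax5b _ _ H5 x c u p w ltac:(by rewrite /= !inE !negb_or !d_xc !d_xu !d_xp !d_xw !d_cu !d_cp !d_cw !d_up !d_uw !d_pw).
move: h0 h1 h2 h3 h4 h5 h6 h7 h8 h9 i0.
rewrite (c_xzy Ha d_px d_pc d_xc) (c_xzy Ha d_px d_pw d_xw) (c_zxy Ha d_up d_ux d_px) (c_yxz Ha d_ux d_uw d_xw) (c_yxz Ha d_px d_pw d_xw) (c_yzx Ha d_ux d_uc d_xc) (c_yzx Ha d_px d_pc d_xc) (c_zxy Ha d_pc d_pw d_cw) (c_zxy Ha d_xc d_xw d_cw).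
move: (chi u p x) (chi u p c) (chi u p w) (chi u x c) (chi u x w) (chi u c w) (chi p x c) (chi p x w) (chi p c w) (chi x c w).
by do 10!case.
Qed.

Lemma exists_max (T : finType) (R : rel T) (S : {set T}) :
  {in S &, forall x y, x != y -> R x y || R y x} ->
  {in S, forall x, ~~ R x x} ->
  {in S & &, forall x y z, R x y -> R y z -> R x z} ->
  forall w0, w0 \in S -> exists2 w, w \in S & forall s, s \in S -> s != w -> R s w.
Proof.
move=> Htot Hirr Htr w0 w0S.
case: (@arg_maxnP _ w0 (mem S) (fun w => #|[set s in S | R s w]|) w0S) => w wS Hmax.
exists w => // s sS nsw.
apply/negPn/negP => nR.
have Rws : R w s by move: (Htot s w sS wS nsw); rewrite (negbTE nR).
have := Hmax s sS.
have sub : w |: [set z in S | R z w] \subset [set z in S | R z s].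
  apply/subsetP => z; rewrite !inE => /orP[/eqP -> | /andP [zS Rzw]].
    by rewrite Rws andbT; exact: wS.
  by rewrite zS (Htr z w s zS wS sS Rzw Rws).
have := subset_leq_card sub.
rewrite cardsU1 inE (negbTE (Hirr w wS)) andbF /= add1n => h1 h2.
by have := leq_trans h1 h2; rewrite ltnn.
Qed.

Definition ltu (T : finType) (chi : T -> T -> T -> bool) (u a b : T) :=
  [&& a != u, b != u, a != b & chi u a b].

Lemma ltuP (T : finType) (chi : T -> T -> T -> bool) (u a b : T) :
  ltu chi u a b -> [/\ a != u, b != u, a != b & chi u a b].
Proof. by case/and4P. Qed.

Lemma ltu_asym (T : finType) (chi : T -> T -> T -> bool) (Ha : alternating_symmetry chi) (u a b : T) :
  ltu chi u a b -> ~~ ltu chi u b a.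
Proof.
case/and4P => au bu ab h; rewrite /ltu au bu eq_sym ab /=.
by rewrite (c_xzy Ha _ _ ab) ?h // eq_sym.
Qed.

Lemma ltu_total (T : finType) (chi : T -> T -> T -> bool) (Ha : alternating_symmetry chi) (u a b : T) :
  a != u -> b != u -> a != b -> ltu chi u a b || ltu chi u b a.
Proof.
move=> au bu ab; rewrite /ltu au bu ab eq_sym ab /=.
by rewrite (c_xzy Ha _ _ ab) ?orbN // eq_sym.
Qed.

Lemma ltu_irr (T : finType) (chi : T -> T -> T -> bool) (u a : T) : ~~ ltu chi u a a.
Proof. by rewrite /ltu eqxx /= !andbF. Qed.

Lemma ltu_trans (T : finType) (chi : T -> T -> T -> bool) (Hchi : chirotope chi) (u : T)
  (Hu : extreme chi u) (a b c : T) :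
  ltu chi u a b -> ltu chi u b c -> ltu chi u a c.
Proof.
case: Hchi => Ha H4 H5.
case: Hu => y yu Hy.
case/and4P => au bu ab hab; case/and4P => _ cu bc hbc.
have ac : a != c.
  apply/negP => /eqP eac; subst c.
  by move: hbc; rewrite (c_xzy Ha _ _ ab) ?hab // eq_sym.
rewrite /ltu au cu ac /=.
have uy : u != y by rewrite eq_sym.
have ua : u != a by rewrite eq_sym.
have ub : u != b by rewrite eq_sym.
have uc : u != c by rewrite eq_sym.
have cy: forall z z', z != u -> z != y -> z' != u -> z' != y -> chi u y z = chi u y z'.
  move=> z z' zu zy z'u z'y; apply: Hy; apply: d3 => //; by rewrite eq_sym.
have ya : y != a -> a != y by rewrite eq_sym.
case: (eqVneq a y) => [eay | ay].
  subst y.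
  by rewrite (cy c b cu _ bu _) ?hab // eq_sym.
case: (eqVneq c y) => [ecy | cyy].
  subst y.
  have ca : c != a by rewrite eq_sym.
  by rewrite (c_xzy Ha uc ua ca) (cy a b au ay bu bc) (c_xzy Ha ub uc bc) hbc.
case: (eqVneq b y) => [eby | byy].
  subst y.
  have ba : b != a by rewrite eq_sym.
  move: hab; rewrite (c_xzy Ha ub ua ba) (cy a c au ay cu cyy).
  by rewrite hbc.
have ya' : y != a by rewrite eq_sym.
have yb : y != b by rewrite eq_sym.
have yc : y != c by rewrite eq_sym.
case E: (chi u y a).
  apply: (H5 u y a b c) => //.
    by rewrite /= !inE !negb_or uy ua ub uc ya' yb yc ab ac bc.
  by rewrite (cy b a bu byy au ay).
  by rewrite (cy c a cu cyy au ay).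
apply: (F0f Ha H4 H5 uy ua ub uc ya' yb yc ab ac bc) => //.
- by rewrite E.
- by rewrite (cy b a bu byy au ay) E.
- by rewrite (cy c a cu cyy au ay) E.
Qed.

Lemma crossbP (T : finType) (s : T -> T -> T -> bool) (A B : {set T}) :
  reflect (exists x y z t, [/\ A = [set x; y], B = [set z; t], uniq [:: x; y; z; t],
             s x y z != s x y t & s z t x != s z t y]) (crossb s A B).
Proof.
apply: (iffP existsP).
  case=> x /existsP [y /existsP [z /existsP [t /and5P [/eqP hA /eqP hB hu h1 h2]]]].
  by exists x, y, z, t.
case=> x [y [z [t [hA hB hu h1 h2]]]].
exists x; apply/existsP; exists y; apply/existsP; exists z; apply/existsP; exists t.
by apply/and5P; split => //; apply/eqP.
Qed.

Lemma crossb_sym (T : finType) (s : T -> T -> T -> bool) (A B : {set T}) :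
  crossb s A B = crossb s B A.
Proof.
by apply/crossbP/crossbP => [] [x [y [z [t [hA hB hu h1 h2]]]]]; exists z, t, x, y;
  split => //; rewrite -(rot_uniq 2) /=.
Qed.

Lemma wcrossb_sym (T : finType) (chi : T -> T -> T -> bool) (u : T) (A B : {set option T}) :
  wcrossb chi u A B = wcrossb chi u B A.
Proof.
rewrite /wcrossb crossb_sym.
by case: (Some u \in A); case: (Some u \in B); case: (None \in A); case: (None \in B).
Qed.

Lemma crossb_irr (T : finType) (s : T -> T -> T -> bool) (A : {set T}) : ~~ crossb s A A.
Proof.
apply/crossbP => [[x [y [z [t [hA hA' hu _ _]]]]]].
have : z \in A by rewrite hA' !inE eqxx.
rewrite hA !inE => /orP [/eqP ezx | /eqP ezy]; subst z; move: hu; rewrite /= !inE !eqxx /= ?orbT ?andbF //.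
Qed.

Lemma set2_cases (T : finType) (a b x y : T) :
  [set a; b] = [set x; y] -> x != y -> (x = a /\ y = b) \/ (x = b /\ y = a).
Proof.
move=> h xy.
have : x \in [set a; b] by rewrite h !inE eqxx.
have : y \in [set a; b] by rewrite h !inE eqxx orbT.
move=> /set2P [] ey /set2P [] ex; subst x y;
  by [left | right | move: xy; rewrite eqxx].
Qed.

Lemma lift2 (T : finType) (x y : T) : liftseg [set x; y] = [set Some x; Some y].
Proof. by rewrite /liftseg imsetU1 imset_set1. Qed.

Lemma None_lift (T : finType) (A : {set T}) : (None \in liftseg A) = false.
Proof. by apply/negbTE/imsetP => [[x _]]. Qed.

Lemma Some_lift (T : finType) (A : {set T}) x : (Some x \in liftseg A) = (x \in A).
Proof. by rewrite mem_imset //; exact: Some_inj. Qed.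

Lemma lift_inj (T : finType) : injective (@liftseg T).
Proof. move=> A B h; apply/setP => x; by rewrite -!(Some_lift _ x) h. Qed.

Lemma unlift (T : finType) (B : {set option T}) :
  None \notin B -> B = liftseg [set z | Some z \in B].
Proof.
move=> nB; apply/setP => [[z|]]; first by rewrite Some_lift inE.
by rewrite None_lift (negbTE nB).
Qed.

Lemma lift_card (T : finType) (A : {set T}) : #|liftseg A| = #|A|.
Proof. by rewrite card_imset //; exact: Some_inj. Qed.

Lemma wcross_lift (T : finType) (chi : T -> T -> T -> bool) (u : T) (A B : {set T}) :
  wcrossb chi u (liftseg A) (liftseg B) = crossb chi A B.
Proof.
rewrite /wcrossb !None_lift !andbF /=.
apply/crossbP/crossbP.
  case=> x' [y' [z' [t' [hA hB hu h1 h2]]]].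
  have : x' \in liftseg A by rewrite hA !inE eqxx.
  case/imsetP => x _ ex; subst x'.
  have : y' \in liftseg A by rewrite hA !inE eqxx orbT.
  case/imsetP => y _ ey; subst y'.
  have : z' \in liftseg B by rewrite hB !inE eqxx.
  case/imsetP => z _ ez; subst z'.
  have : t' \in liftseg B by rewrite hB !inE eqxx orbT.
  case/imsetP => t _ et; subst t'.
  exists x, y, z, t; split => //; apply: lift_inj; by rewrite ?hA ?hB lift2.
case=> x [y [z [t [hA hB hu h1 h2]]]].
exists (Some x), (Some y), (Some z), (Some t); split => //; by rewrite ?hA ?hB lift2.
Qed.

Lemma uniq4 (T : eqType) (x y z t : T) : uniq [:: x; y; z; t] ->
  [/\ x != y, x != z, x != t & [/\ y != z, y != t & z != t]].
Proof.
move=> hu; split; try split; apply/negP => /eqP e; subst; move: hu;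
  by rewrite /= !inE !eqxx /= ?orbT ?orTb ?andbF ?andFb.
Qed.

Lemma hull_nocross (T : finType) (chi : T -> T -> T -> bool) (Ha : alternating_symmetry chi) (a b : T) :
  a != b -> (forall s, s != a -> s != b -> chi a b s) -> forall B, ~~ crossb chi [set a; b] B.
Proof.
move=> ab H B; apply/crossbP => [[x [y [z [t [hA hB hu h1 _]]]]]].
case: (uniq4 hu) => xy xz xt [yz yt zt].
have [zx zy tx ty] : [/\ z != x, z != y, t != x & t != y] by rewrite !(eq_sym _ x) !(eq_sym _ y).
case: (set2_cases hA xy) => [[ex ey] | [ex ey]]; subst x y.
  by move: h1; rewrite !H.
have ba : b != a by rewrite eq_sym.
by move: h1; rewrite (c_yxz Ha ab _ _) ?(c_yxz Ha ab _ _) ?H // eq_sym.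
Qed.

Lemma ltuP' (T : finType) (chi : T -> T -> T -> bool) (u a b : T) :
  ltu chi u a b -> [/\ u != a, u != b, a != b & chi u a b].
Proof. by case/and4P => au bu ab h; rewrite !(eq_sym u) au bu ab h. Qed.

Lemma ltuE (T : finType) (chi : T -> T -> T -> bool) (u a b : T) :
  a != u -> b != u -> a != b -> ltu chi u a b = chi u a b.
Proof. by rewrite /ltu => -> -> ->. Qed.

Lemma F1w (T : finType) (chi : T -> T -> T -> bool) (Hchi : chirotope chi) (u : T)
  (Hu : extreme chi u) (a b c w : T) :
  ltu chi u a b -> ltu chi u b c -> ltu chi u c w ->
  chi a b c -> chi w a c -> chi w b c -> ~~ chi a b w -> False.
Proof.
case: (Hchi) => Ha H4 H5 l1 l2 l3.
have l4 := ltu_trans Hchi Hu l1 l2; have l5 := ltu_trans Hchi Hu l4 l3.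
have l6 := ltu_trans Hchi Hu l2 l3.
case: (ltuP' l1) => ua ub ab h1; case: (ltuP' l2) => _ uc bc h2; case: (ltuP' l3) => _ uw cw h3.
case: (ltuP' l4) => _ _ ac h4; case: (ltuP' l5) => _ _ aw h5; case: (ltuP' l6) => _ _ bw h6.
exact: (F1 Ha H4 H5 ua ub uc uw ab ac aw bc bw cw h1 h4 h5 h2 h6 h3).
Qed.

Lemma F2w (T : finType) (chi : T -> T -> T -> bool) (Hchi : chirotope chi) (u : T)
  (Hu : extreme chi u) (a c b w : T) :
  ltu chi u a c -> ltu chi u c b -> ltu chi u b w ->
  chi a b c -> chi w a c -> chi w b c -> ~~ chi a b w -> False.
Proof.
case: (Hchi) => Ha H4 H5 l1 l2 l3.
have l4 := ltu_trans Hchi Hu l1 l2; have l5 := ltu_trans Hchi Hu l4 l3.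
have l6 := ltu_trans Hchi Hu l2 l3.
case: (ltuP' l1) => ua uc ac h1; case: (ltuP' l2) => _ ub cb h2; case: (ltuP' l3) => _ uw bw h3.
case: (ltuP' l4) => _ _ ab h4; case: (ltuP' l5) => _ _ aw h5; case: (ltuP' l6) => _ _ cw h6.
exact: (F2 Ha H4 H5 ua uc ub uw ac ab aw cb cw bw h1 h4 h5 h2 h6 h3).
Qed.

Lemma F3w (T : finType) (chi : T -> T -> T -> bool) (Hchi : chirotope chi) (u : T)
  (Hu : extreme chi u) (p x c w : T) :
  ltu chi u p x -> ltu chi u x c -> ltu chi u c w ->
  ~~ chi p c x -> chi w p c -> chi w x c -> chi p w x -> False.
Proof.
case: (Hchi) => Ha H4 H5 l1 l2 l3.
have l4 := ltu_trans Hchi Hu l1 l2; have l5 := ltu_trans Hchi Hu l4 l3.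
have l6 := ltu_trans Hchi Hu l2 l3.
case: (ltuP' l1) => up ux px h1; case: (ltuP' l2) => _ uc xc h2; case: (ltuP' l3) => _ uw cw h3.
case: (ltuP' l4) => _ _ pc h4; case: (ltuP' l5) => _ _ pw h5; case: (ltuP' l6) => _ _ xw h6.
exact: (F3 Ha H4 H5 up ux uc uw px pc pw xc xw cw h1 h4 h5 h2 h6 h3).
Qed.

Lemma ray_core (T : finType) (chi : T -> T -> T -> bool) (Hchi : chirotope chi) (u : T)
  (Hu : extreme chi u) (x p q : T) :
  x != u -> p != u -> q != u -> p != x -> q != x -> p != q ->
  chi x p u != chi x q u -> chi p q x != ~~ chi p q u ->
  exists p' q', [/\ ltu chi u p' x, ltu chi u x q' & chi p' q' x].
Proof.
case: (Hchi) => Ha H4 H5.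
have core : forall p q, x != u -> p != u -> q != u -> p != x -> q != x -> p != q ->
  ltu chi u p q -> chi x p u != chi x q u -> chi p q x != ~~ chi p q u ->
  exists p' q', [/\ ltu chi u p' x, ltu chi u x q' & chi p' q' x].
  move=> {}p {}q xu' pu qu px qx pq lpq E1 E2.
  have ux : u != x by rewrite eq_sym.
  have up : u != p by rewrite eq_sym.
  have uq : u != q by rewrite eq_sym.
  have xp : x != p by rewrite eq_sym.
  have xq : x != q by rewrite eq_sym.
  move: E1 E2; rewrite (c_yzx Ha ux up xp) (c_yzx Ha ux uq xq) (c_yzx Ha up uq pq).
  case: (ltuP' lpq) => _ _ _ -> E1 hx0.
  have hx : chi p q x by move: hx0; case: (chi p q x).
  exists p, q; split => //.
  - rewrite ltuE // (c_xzy Ha ux up xp).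
    apply/negP => hxp.
    have lxp : ltu chi u x p by rewrite ltuE.
    have hxq : chi u x q = false by move: E1; rewrite hxp; case: (chi u x q).
    have lqx : ltu chi u q x by rewrite ltuE // (c_xzy Ha ux uq xq) hxq.
    by move: (ltu_asym Ha lpq); rewrite (ltu_trans Hchi Hu lqx lxp).
  - rewrite ltuE //; apply/negPn/negP => hxq.
    have lqx : ltu chi u q x by rewrite ltuE // (c_xzy Ha ux uq xq).
    have hxp : chi u x p by move: E1; rewrite (negbTE hxq); case: (chi u x p).
    have lxp : ltu chi u x p by rewrite ltuE.
    by move: (ltu_asym Ha lpq); rewrite (ltu_trans Hchi Hu lqx lxp).
move=> xu pu qu px qx pq E1 E2.
case/orP: (ltu_total Ha pu qu pq) => lpq; first exact: (core p q).
have qp : q != p by rewrite eq_sym.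
apply: (core q p) => //; first by rewrite eq_sym.
have ux : u != x by rewrite eq_sym.
by move: E2; rewrite (c_yxz Ha pq _ _) // (c_yxz Ha pq _ _) // ?negbK ?(eq_sym u) //; case: (chi p q x); case: (chi p q u).
Qed.

Lemma ray_cross (T : finType) (chi : T -> T -> T -> bool) (Hchi : chirotope chi) (u : T)
  (Hu : extreme chi u) (x : T) (S : {set option T}) :
  x != u -> wcrossb chi u [set None; Some x] S ->
  exists p q, [/\ ltu chi u p x, ltu chi u x q & chi p q x].
Proof.
move=> xu /andP [/andP [_ g2] /crossbP [x1 [y1 [z1 [t1 [hA hB hu h1 h2]]]]]].
have uS : Some u \notin S by move: g2; rewrite !inE eqxx.
case: (uniq4 hu) => xy xz xt [yz yt zt].
have [hz ht] : ((z1 != None) && (z1 != Some x)) /\ ((t1 != None) && (t1 != Some x)).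
  case: (set2_cases hA xy) => [[e1 e2] | [e1 e2]]; subst x1 y1;
  by rewrite !(eq_sym z1) !(eq_sym t1) xz yz xt yt.
have [p ep] : exists p, z1 = Some p by case: (z1) hz => [p|] // _; exists p.
have [q eq] : exists q, t1 = Some q by case: (t1) ht => [q|] // _; exists q.
subst z1 t1.
have pu : p != u by apply: contraNneq uS => <-; rewrite hB !inE eqxx.
have qu : q != u by apply: contraNneq uS => <-; rewrite hB !inE eqxx orbT.
have px : p != x by move: hz => /andP [_]; apply: contra => /eqP ->.
have qx : q != x by move: ht => /andP [_]; apply: contra => /eqP ->.
have pq : p != q by move: zt; apply: contra => /eqP ->.
case: (set2_cases hA xy) => [[e1 e2] | [e1 e2]]; subst x1 y1.
  apply: (ray_core Hchi Hu xu pu qu px qx pq).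
    by move: h1 => /=; case: (chi x p u); case: (chi x q u).
  by move: h2 => /=; rewrite eq_sym.
exact: (ray_core Hchi Hu xu pu qu px qx pq h1 h2).
Qed.

Lemma ray_cross2 (T : finType) (chi : T -> T -> T -> bool) (Hchi : chirotope chi) (u : T)
  (Hu : extreme chi u) (a x b : T) :
  ltu chi u a x -> ltu chi u x b -> chi a b x ->
  wcrossb chi u [set None; Some x] (liftseg [set a; b]).
Proof.
case: (Hchi) => Ha H4 H5 lax lxb habx.
have lab := ltu_trans Hchi Hu lax lxb.
case: (ltuP' lax) => ua ux ax hax; case: (ltuP' lxb) => _ ub xb hxb; case: (ltuP' lab) => _ _ ab hab.
rewrite /wcrossb lift2 !inE /= !negb_or.
have -> : (Some u == Some a) = false by apply/negbTE; move: ua; apply: contra => /eqP [->].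
have -> : (Some u == Some b) = false by apply/negbTE; move: ub; apply: contra => /eqP [->].
rewrite /= !andbF /=.
apply/crossbP; exists None, (Some x), (Some a), (Some b); split => //.
- rewrite /= !inE /= !negb_or.
  have -> : (Some x == Some a) = false by apply/negbTE; move: ax; rewrite eq_sym; apply: contra => /eqP [->].
  have -> : (Some x == Some b) = false by apply/negbTE; move: xb; apply: contra => /eqP [->].
  have -> : (Some a == Some b) = false by apply/negbTE; move: ab; apply: contra => /eqP [->].
  done.
- have xa : x != a by rewrite eq_sym.
  have bx : b != x by rewrite eq_sym.
  by rewrite /= (c_yzx Ha ux ua xa) (c_yzx Ha ux ub xb) (c_xzy Ha ua ux ax) hax hxb.
- by rewrite /= (c_yzx Ha ua ub ab) hab habx.
Qed.

Lemma hull_ind (T : finType) (chi : T -> T -> T -> bool) (Hchi : chirotope chi) (u : T)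
  (Hu : extreme chi u) (n : nat) (S : {set T}) :
  #|S| <= n -> u \notin S ->
  forall x p q, x \in S -> p \in S -> q \in S ->
  ltu chi u p x -> ltu chi u x q -> chi p q x ->
  exists a b, [/\ a \in S, b \in S, ltu chi u a x, ltu chi u x b &
                 forall s, s \in S -> s != a -> s != b -> chi a b s].
Proof.
case: (Hchi) => Ha H4 H5.
elim: n S => [|n IH] S.
  by rewrite leqn0 => /eqP/cards0_eq -> _ x p q; rewrite inE.
move=> Sn uS x p q xS pS qS lpx lxq hpqx.
have neu : forall z, z \in S -> z != u by move=> z zS; apply: contraNneq uS => <-.
have [w wS wmax] : exists2 w, w \in S & forall s, s \in S -> s != w -> ltu chi u s w.
  apply: (@exists_max T (ltu chi u) S _ _ _ x xS).
  - by move=> a b aS bS ab; apply: ltu_total => //; apply: neu.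
  - by move=> a _; apply: ltu_irr.
  - by move=> a b c _ _ _; apply: ltu_trans.
have xw : x != w.
  apply/negP => /eqP exw; subst w.
  case: (ltuP' lxq) => _ _ xq _.
  have := wmax q qS; rewrite eq_sym xq => /(_ isT) lqx.
  by move: (ltu_asym Ha lxq); rewrite lqx.
have lxw := wmax x xS xw.
have pw : p != w.
  apply/negP => /eqP epw; subst w.
  by move: (ltu_asym Ha lpx); rewrite lxw.
set S0 := S :\ w.
have S0n : #|S0| <= n by move: Sn; rewrite (cardsD1 w S) wS.
have uS0 : u \notin S0 by rewrite !inE negb_and uS orbT.
have xS0 : x \in S0 by rewrite !inE xw.
have pS0 : p \in S0 by rewrite !inE pw.
have inS0 : forall z, z \in S0 -> z \in S /\ z != w by move=> z; rewrite !inE => /andP [-> ->].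
have [c cS0 cmax] : exists2 c, c \in S0 & forall s, s \in S0 -> s != c -> chi w s c.
  set R := fun s c => (s != c) && chi w s c.
  have Rtot : {in S0 &, forall a b, a != b -> R a b || R b a}.
    move=> a b aS bS ab /=; rewrite /R ab eq_sym ab /=.
    case: (inS0 a aS) => _ aw; case: (inS0 b bS) => _ bw.
    by rewrite (c_xzy Ha _ _ ab) ?orbN // eq_sym.
  have Rirr : {in S0, forall a, ~~ R a a} by move=> a _; rewrite /R eqxx.
  have Rtr : {in S0 & &, forall a b d, R a b -> R b d -> R a d}.
    move=> a b d aS bS dS /andP [ab hab] /andP [bd hbd].
    case: (inS0 a aS) => aS' aw; case: (inS0 b bS) => bS' bw; case: (inS0 d dS) => dS' dw.
    case: (eqVneq a d) => [ead | ad].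
      subst d; move: hbd; rewrite (c_xzy Ha _ _ ab) ?hab // eq_sym //.
    rewrite /R ad /=.
    have wu : w != u by apply: neu.
    have au := neu a aS'; have bu := neu b bS'; have du := neu d dS'.
    have cw : forall z, z \in S -> z != w -> chi w u z.
      move=> z zS zw; have := wmax z zS zw; case/ltuP' => uz uw' _ h.
      by rewrite (c_zxy Ha uz uw' _) // eq_sym.
    apply: (H5 w u a b d) => //; try by apply: cw.
    by rewrite /= !inE !negb_or wu !(eq_sym w) aw bw dw !(eq_sym u) au bu du ab ad bd.
  have [c cS0 cmax] := @exists_max T R S0 Rtot Rirr Rtr x xS0.
  by exists c => // s sS sc; case/andP: (cmax s sS sc).
have cS : c \in S by case: (inS0 c cS0).
have cw : c != w by case: (inS0 c cS0).
have edge : ltu chi u c x -> exists a b, [/\ a \in S, b \in S, ltu chi u a x, ltu chi u x b &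
                 forall s, s \in S -> s != a -> s != b -> chi a b s].
  move=> lcx; exists c, w; split => // s sS sc sw.
  have sS0 : s \in S0 by rewrite !inE sw.
  have ws : w != s by rewrite eq_sym.
  have wc : w != c by rewrite eq_sym.
  by rewrite (c_zxy Ha ws wc sc) cmax.
have reduce : ~ (c = x \/ ltu chi u x c) -> ltu chi u c x.
  move=> H; case: (eqVneq c x) => [ecx|cx]; first by exfalso; apply: H; left.
  case/orP: (ltu_total Ha (neu c cS) (neu x xS) cx) => // lxc; exfalso; apply: H; right; exact: lxc.
have ltcw := wmax c cS cw.
case: (boolP [exists p', exists q', [&& p' \in S0, q' \in S0, ltu chi u p' x, ltu chi u x q' & chi p' q' x]])
  => [/existsP [p' /existsP [q' /and5P [p'S q'S lp' lq' hp'q']]] | nex].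
  have [a [b [aS bS lax lxb hull]]] := IH S0 S0n uS0 x p' q' xS0 p'S q'S lp' lq' hp'q'.
  case: (inS0 a aS) => aS' aw; case: (inS0 b bS) => bS' bw.
  case E: (chi a b w).
    exists a, b; split => // s sS sa sb.
    case: (eqVneq s w) => [-> // | sw].
    by apply: hull => //; rewrite !inE sw.
  apply: edge; apply: reduce => Hc.
  have lac : ltu chi u a c by case: Hc => [-> // | lxc]; apply: ltu_trans lax lxc.
  have lab := ltu_trans Hchi Hu lax lxb.
  have ac : a != c by case: (ltuP' lac).
  have ca : c != a by rewrite eq_sym.
  have ab : a != b by case: (ltuP' lab).
  have hwac : chi w a c := cmax a aS ac.
  case: (eqVneq c b) => [ecb | cb].
    subst c.
    by move: E; rewrite -(c_zxy Ha ab aw bw) hwac.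
  have bc : b != c by rewrite eq_sym.
  have hwbc : chi w b c := cmax b bS bc.
  have habc : chi a b c := hull c cS0 ca cb.
  case/orP: (ltu_total Ha (neu b bS') (neu c cS) bc) => [lbc | lcb].
    exact: (F1w Hchi Hu lab lbc ltcw habc hwac hwbc (negbT E)).
  exact: (F2w Hchi Hu lac lcb (wmax b bS' bw) habc hwac hwbc (negbT E)).
have qw : q = w.
  apply/eqP; apply/negPn/negP => qw; apply: (negP nex).
  apply/existsP; exists p; apply/existsP; exists q.
  by rewrite pS0 !inE qw qS lpx lxq hpqx.
subst q.
apply: edge; apply: reduce => Hc.
case: Hc => [ecx | lxc].
  subst c.
  have wp : w != p by rewrite eq_sym.
  have px : p != x by case: (ltuP' lpx).
  have := cmax p pS0 px.
  have wx : w != x by rewrite eq_sym.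
  by move: hpqx; rewrite -(c_yzx Ha pw px wx) (c_xzy Ha wp wx px) => /negP.
have nh : ~~ chi p c x.
  apply/negP => h; apply: (negP nex).
  apply/existsP; exists p; apply/existsP; exists c.
  by rewrite pS0 cS0 lpx lxc h.
have pc : p != c by case: (ltuP' (ltu_trans Hchi Hu lpx lxc)).
have xc : x != c by case: (ltuP' lxc).
exact: (F3w Hchi Hu lpx lxc ltcw nh (cmax p pS0 pc) (cmax x xS0 xc) hpqx).
Qed.

Definition Lset (T : finType) (chi : T -> T -> T -> bool) (u : T) : {set T} :=
  [set x | (x != u) && [forall S : {set option T}, wsegment u S ==> ~~ wcrossb chi u [set None; Some x] S]].

Definition Rset (T : finType) (chi : T -> T -> T -> bool) (u : T) : {set {set option T}} :=
  [set [set None; Some x] | x in Lset chi u].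

Definition Xset (T : finType) (chi : T -> T -> T -> bool) (u : T) (D : {set {set T}}) : {set T} :=
  [set x | (x != u) && [forall A in D, ~~ wcrossb chi u [set None; Some x] (liftseg A)]].

Lemma extensionE (T : finType) (chi : T -> T -> T -> bool) (u : T) (D : {set {set T}}) :
  extension chi u D = [set liftseg A | A in D] :|: [set [set None; Some x] | x in Xset chi u D].
Proof. by []. Qed.

Lemma ray_wseg (T : finType) (u x : T) : x != u -> wsegment u [set None; Some x].
Proof.
move=> xu; rewrite /wsegment cards2 /=.
apply/eqP => h.
have : Some x \in [set Some u; None] by rewrite -h !inE eqxx orbT.
by rewrite !inE /= => /orP [/eqP [] /eqP | //]; rewrite (negbTE xu).
Qed.

Lemma lift_wseg (T : finType) (u : T) (A : {set T}) : #|A| == 2 -> wsegment u (liftseg A).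
Proof.
move=> hA; rewrite /wsegment lift_card hA /=.
apply/eqP => h.
have : None \in liftseg A by rewrite h !inE eqxx orbT.
by rewrite None_lift.
Qed.

Lemma wseg_card (T : finType) (u : T) (A : {set option T}) : wsegment u A -> #|A| = 2.
Proof. by case/andP => /eqP. Qed.

Lemma ray_decomp (T : finType) (A : {set option T}) :
  #|A| = 2 -> None \in A -> exists x, A = [set None; Some x].
Proof.
move=> hc hN.
have : #|A :\ None| == 1 by apply/eqP; move: hc; rewrite (cardsD1 None A) hN add1n; case.
case/cards1P => o ho.
have oA : o \in A :\ None by rewrite ho set11.
case: o ho oA => [x|] ho; last by rewrite !inE eqxx.
by exists x; rewrite -(setD1K hN) ho.
Qed.

Lemma L_nocross (T : finType) (chi : T -> T -> T -> bool) (u x : T) (S : {set option T}) :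
  x \in Lset chi u -> wsegment u S ->
  ~~ wcrossb chi u [set None; Some x] S /\ ~~ wcrossb chi u S [set None; Some x].
Proof.
rewrite inE => /andP [_ /forallP H] hS.
have := H S; rewrite hS /= => h.
by split => //; rewrite wcrossb_sym.
Qed.

Lemma L_in_wt (T : finType) (chi : T -> T -> T -> bool) (u : T) (W : {set {set option T}}) :
  weak_triangulation chi u W -> Rset chi u \subset [set A in W | None \in A].
Proof.
case=> Hok Hnc Hmax; apply/subsetP => A /imsetP [x xL ->].
rewrite inE !inE eqxx andbT.
have xu : x != u by move: xL; rewrite inE => /andP [].
apply/negPn/negP => nA.
case: (Hmax _ (ray_wseg xu) nA) => B BW hB.
by case: (L_nocross xL (Hok B BW)) => /negP.
Qed.

Lemma hull_exists (T : finType) (chi : T -> T -> T -> bool) (Hchi : chirotope chi) (u : T)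
  (Hu : extreme chi u) (x : T) :
  x != u -> x \notin Lset chi u ->
  exists a b, [/\ a != u, b != u, a != b,
    wcrossb chi u [set None; Some x] (liftseg [set a; b]) &
    forall B : {set T}, ~~ crossb chi [set a; b] B].
Proof.
case: (Hchi) => Ha H4 H5.
move=> xu; rewrite inE xu /= => /forallPn [S]; rewrite negb_imply negbK => /andP [_ hS].
have [p [q [lpx lxq hpqx]]] := ray_cross Hchi Hu xu hS.
set S0 := [set z | z != u].
have uS0 : u \notin S0 by rewrite inE eqxx.
have inS0 : forall z, z != u -> z \in S0 by move=> z; rewrite inE.
case: (ltuP lpx) => pu _ px _; case: (ltuP lxq) => _ qu xq _.
have [a [b [aS bS lax lxb hull]]] :=
  hull_ind Hchi Hu (leqnn #|S0|) uS0 (inS0 x xu) (inS0 p pu) (inS0 q qu) lpx lxq hpqx.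
have lab := ltu_trans Hchi Hu lax lxb.
case: (ltuP lax) => au _ ax _; case: (ltuP lxb) => _ bu xb _; case: (ltuP lab) => _ _ ab hab.
exists a, b; split => //.
  apply: (ray_cross2 Hchi Hu lax lxb); apply: hull; rewrite ?inS0 //.
  by rewrite eq_sym.
apply: (hull_nocross Ha ab) => s sa sb.
case: (eqVneq s u) => [-> | su].
  by rewrite (c_yzx Ha _ _ ab) ?hab // eq_sym.
by apply: hull; rewrite ?inS0.
Qed.

Lemma hull_wnocross (T : finType) (chi : T -> T -> T -> bool) (u a b : T) (B : {set option T}) :
  (forall B : {set T}, ~~ crossb chi [set a; b] B) -> None \notin B ->
  ~~ wcrossb chi u (liftseg [set a; b]) B.
Proof. by move=> H nB; rewrite (unlift nB) wcross_lift H. Qed.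

Lemma X_sub_L (T : finType) (chi : T -> T -> T -> bool) (Hchi : chirotope chi) (u : T)
  (Hu : extreme chi u) (D0 : {set {set T}}) :
  (forall a b, a != u -> b != u -> a != b -> (forall B : {set T}, ~~ crossb chi [set a; b] B) ->
     [set a; b] \in D0) ->
  Xset chi u D0 \subset Lset chi u.
Proof.
move=> H; apply/subsetP => x; rewrite inE => /andP [xu /forall_inP hx].
apply/negPn/negP => nL.
have [a [b [au bu ab hcr hnc]]] := hull_exists Hchi Hu xu nL.
by move: (hx _ (H a b au bu ab hnc)); rewrite hcr.
Qed.

Lemma F_exists (T : finType) (chi : T -> T -> T -> bool) (Hchi : chirotope chi) (u : T)
  (Hu : extreme chi u) :
  exists2 F, weak_triangulation chi u F & [set A in F | None \in A] \subset Rset chi u.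
Proof.
pose allowed := fun A : {set option T} => wsegment u A && ((None \in A) ==> (A \in Rset chi u)).
pose P := fun F : {set {set option T}} =>
  [forall A in F, allowed A] && [forall A in F, forall B in F, ~~ wcrossb chi u A B].
have P0 : P set0 by apply/andP; split; apply/forall_inP => A; rewrite inE.
case: (@arg_maxnP _ set0 P (fun F => #|F|) P0) => F PF Fmax.
move: (PF) => /andP [/forall_inP Fok /forall_inP Fnc].
have claim : forall A, allowed A -> A \notin F -> exists2 B, B \in F & wcrossb chi u A B.
  move=> A aA nA.
  case: (boolP [exists B in F, wcrossb chi u A B]) => [/exists_inP [B BF hB] | nex];
    first by exists B.
  exfalso.
  move/exists_inPn: nex => nex.
  have irrA : ~~ wcrossb chi u A A by rewrite /wcrossb (negbTE (crossb_irr _ _)) andbF.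
  have PF' : P (A |: F).
    apply/andP; split; apply/forall_inP => B; rewrite in_setU1 => /orP [/eqP -> | BF].
    - exact: aA.
    - exact: Fok.
    - apply/forall_inP => C; rewrite in_setU1 => /orP [/eqP -> | CF]; first exact: irrA.
      exact: nex.
    - apply/forall_inP => C; rewrite in_setU1 => /orP [/eqP -> | CF].
        by rewrite wcrossb_sym; apply: nex.
      exact: (forall_inP (Fnc B BF) C CF).
  by have := Fmax _ PF'; rewrite cardsU1 nA add1n /= ltnn.
exists F.
  split.
  - by move=> A AF; case/andP: (Fok A AF).
  - by move=> A B AF BF; exact: (forall_inP (Fnc A AF) B BF).
  - move=> A hA nA.
    case: (boolP (None \in A)) => hN; last by apply: claim => //; apply/andP; split => //; rewrite (negbTE hN).
    case: (boolP (A \in Rset chi u)) => hR; first by apply: claim => //; apply/andP; split => //; apply/implyP.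
    have [x ex] := ray_decomp (wseg_card hA) hN; subst A.
    have xu : x != u.
      apply/eqP => exu; subst x.
      by move: hA => /andP [_]; rewrite setUC eqxx.
    have xL : x \notin Lset chi u by apply: contra hR => xL; apply/imsetP; exists x.
    have [a [b [au bu ab hcr hnc]]] := hull_exists Hchi Hu xu xL.
    exists (liftseg [set a; b]) => //.
    apply/negPn/negP => nF.
    have wab : wsegment u (liftseg [set a; b]) by apply: lift_wseg; rewrite cards2 ab.
    have al : allowed (liftseg [set a; b]) by rewrite /allowed wab None_lift.
    case: (claim _ al nF) => B BF hB.
    case/andP: (Fok B BF) => wB; case: (boolP (None \in B)) => hNB /=.
      case/imsetP => z zL eB; subst B.
      by case: (L_nocross zL wab) => _ /negP.
    by move=> _; move: (hull_wnocross u hnc hNB); rewrite hB.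
apply/subsetP => A; rewrite inE => /andP [AF hN].
by case/andP: (Fok A AF) => _; rewrite hN.
Qed.

Theorem lemma3p2 (T : finType) (chi : T -> T -> T -> bool) (u : T)
  (Hchi : chirotope chi) (Hu : extreme chi u) (m : nat)
  (Hm_att : exists2 D, weak_triangulation chi u D & degree D None = m)
  (Hm_min : forall D, weak_triangulation chi u D -> m <= degree D None)
  (D : {set {set option T}}) (HD : weak_triangulation chi u D) :
  (exists2 D0, triangulation chi D0 & D = extension chi u D0) <->
  degree D None = m.
Proof.
case: (Hchi) => Ha H4 H5.
have Rle : forall W, weak_triangulation chi u W -> #|Rset chi u| <= degree W None.
  by move=> W hW; rewrite /degree; apply: subset_leq_card; exact: L_in_wt.
have [F hF Fsub] := F_exists Hchi Hu.
have mR : m = #|Rset chi u|.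
  apply/eqP; rewrite eqn_leq; apply/andP; split.
    by apply: (leq_trans (Hm_min F hF)); rewrite /degree; exact: subset_leq_card.
  by case: Hm_att => Dm hDm <-; exact: Rle.
rewrite mR; split.
- case=> D0 [T1 T2 T3] eD.
  have sub : [set A in D | None \in A] \subset Rset chi u.
    apply/subsetP => A; rewrite inE => /andP [AD hN].
    move: AD; rewrite eD extensionE inE => /orP [/imsetP [A' _ eA] | /imsetP [x xX eA]].
      by move: hN; rewrite eA None_lift.
    rewrite eA; apply/imsetP; exists x => //.
    apply: (subsetP (X_sub_L Hchi Hu _)) xX.
    move=> a b au bu ab hnc; apply/negPn/negP => nab.
    have seg : segment [set a; b] by rewrite /segment cards2 ab.
    case: (T3 _ seg nab) => B _ hB.
    by move: (hnc B); rewrite hB.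
  by apply/eqP; rewrite eqn_leq Rle // andbT /degree; exact: subset_leq_card.
- move=> hdeg.
  have eqR : [set A in D | None \in A] = Rset chi u.
    apply/eqP; rewrite eq_sym eqEcard (L_in_wt HD) /=.
    by move: hdeg; rewrite /degree => ->.
  have inR : forall A, A \in D -> None \in A -> A \in Rset chi u.
    by move=> A AD hN; rewrite -eqR inE AD hN.
  have RD : forall A, A \in Rset chi u -> A \in D by move=> A; rewrite -eqR inE => /andP [].
  case: (HD) => Dok Dnc Dmax.
  pose D0 := [set A : {set T} | liftseg A \in D].
  have tri : triangulation chi D0.
    split.
    - move=> A; rewrite inE => AD; rewrite /segment.
      by move/wseg_card: (Dok _ AD); rewrite lift_card => ->.
    - by move=> A B; rewrite !inE => AD BD; rewrite -(wcross_lift chi u); exact: Dnc.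
    - move=> A sA nA.
      have wA : wsegment u (liftseg A) by apply: lift_wseg.
      have nA' : liftseg A \notin D by move: nA; rewrite inE.
      case: (Dmax _ wA nA') => B BD hB.
      case: (boolP (None \in B)) => hN.
        case/imsetP: (inR B BD hN) => z zL eB; subst B.
        by case: (L_nocross zL wA) => _ /negP.
      exists [set z | Some z \in B].
        by rewrite inE -(unlift hN).
      by rewrite -(wcross_lift chi u) -(unlift hN).
  exists D0 => //.
  have XL : Xset chi u D0 = Lset chi u.
    apply/eqP; rewrite eqEsubset; apply/andP; split.
      apply: X_sub_L => // a b au bu ab hnc.
      rewrite inE; apply/negPn/negP => nab.
      have wab : wsegment u (liftseg [set a; b]) by apply: lift_wseg; rewrite cards2 ab.
      case: (Dmax _ wab nab) => B BD hB.
      case: (boolP (None \in B)) => hN.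
        case/imsetP: (inR B BD hN) => z zL eB; subst B.
        by case: (L_nocross zL wab) => _ /negP.
      by move: (hull_wnocross u hnc hN); rewrite hB.
    apply/subsetP => x xL; rewrite inE.
    have xu : x != u by move: xL; rewrite inE => /andP [].
    rewrite xu /=; apply/forall_inP => A; rewrite inE => AD.
    by case: (L_nocross xL (Dok _ AD)).
  rewrite extensionE XL -/(Rset chi u).
  apply/setP => A; rewrite inE.
  case: (boolP (None \in A)) => hN.
    have -> : (A \in [set liftseg A0 | A0 in D0]) = false.
      by apply/negbTE/imsetP => [[A0 _ eA]]; move: hN; rewrite eA None_lift.
    by apply/idP/idP => [AD | AR]; [exact: inR | exact: RD].
  have -> : (A \in Rset chi u) = false.
    by apply/negbTE/imsetP => [[x _ eA]]; move: hN; rewrite eA !inE eqxx.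
  rewrite orbF; apply/idP/imsetP => [AD | [A0 A0D ->]].
    by exists [set z | Some z \in A]; rewrite ?inE -?(unlift hN).
  by move: A0D; rewrite inE.
Qed.
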